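(* Let $\mathfrak{M}$ be a model, $x$ a variable, $f$ any Boolean expression in $n$ arguments, $\theta,\varphi_1,\dots,\varphi_n$ formulas, $z_1,\dots,z_m$ variables distinct from $x$ none of which occurs free in $\theta$, and $Q_1,\dots,Q_m\in\{\forall,\exists\}$. If every $\varphi_i$ is non-dependent of $x$ in $\mathfrak{M}$ provided $\theta$, then $$[\![\exists x\theta\to Q_mz_m\dots Q_1z_1\,f\big(\forall x(\theta\to\varphi_1),\dots,\forall x(\theta\to\varphi_n)\big)]\!]^{\mathfrak{M}}=[\![\forall x\big(\theta\to Q_mz_m\dots Q_1z_1\,f(\varphi_1,\dots,\varphi_n)\big)]\!]^{\mathfrak{M}},$$ and hence, if moreover $\mathfrak{M}\models\exists x\theta$, then $$[\![Q_mz_m\dots Q_1z_1\,f\big(\forall x(\theta\to\varphi_1),\dots,\forall x(\theta\to\varphi_n)\big)]\!]^{\mathfrak{M}}=[\![\forall x\big(\theta\to Q_mz_m\dots Q_1z_1\,f(\varphi_1,\dots,\varphi_n)\big)]\!]^{\mathfrak{M}}.$$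
   Context: Work in first-order logic with equality over a relational signature, with countably many variables $v_1,v_2,\dots$. A model $\mathfrak{M}$ has nonempty universe $M$; assignments are $\bar a\in M^\omega$ ($a_i$ is the value of $v_i$); for $x=v_i$, $b\in M$, $\bar a^x_b$ is $\bar a$ with $i$-th entry replaced by $b$. $[\![\varphi]\!]^{\mathfrak{M}}=\{\bar a\in M^\omega:\mathfrak{M}\models\varphi[\bar a]\}$; $\mathfrak{M}\models\chi$ means every $\bar a$ satisfies $\chi$. A Boolean expression is built from its arguments using $\neg$ and $\land$ (and hence any Boolean connectives). Definition: $\varphi$ is non-dependent of $x$ in $\mathfrak{M}$ provided $\theta$ iff for all $\bar a\in M^\omega$, $b\in M$: if $\mathfrak{M}\models\theta[\bar a]$ and $\mathfrak{M}\models\theta[\bar a^x_b]$ then ($\mathfrak{M}\models\varphi[\bar a]\iff\mathfrak{M}\models\varphi[\bar a^x_b]$). *)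

(* Defs.v *)
From Stdlib Require Import List Arith Bool.
From Stdlib Require Fin.
Import ListNotations.

Set Implicit Arguments.

Section Syntax.
Variable Rel : Type.

Inductive form : Type :=
| FEq  : nat -> nat -> form
| FRel : Rel -> list nat -> form
| FNeg : form -> form
| FAnd : form -> form -> form
| FAll : nat -> form -> form.

Definition FEx (x : nat) (p : form) : form := FNeg (FAll x (FNeg p)).
Definition FImp (p q : form) : form := FNeg (FAnd p (FNeg q)).

Fixpoint free (y : nat) (p : form) : Prop :=
  match p with
  | FEq a b => y = a \/ y = b
  | FRel _ l => In y l
  | FNeg q => free y q
  | FAnd q r => free y q \/ free y r
  | FAll z q => y <> z /\ free y q
  end.

(* Quantifier prefix: the list [(Q_1,z_1); ...; (Q_m,z_m)] (true = forall,
   false = exists) yields  Q_m z_m ... Q_1 z_1 p. *)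
Fixpoint qprefix (qs : list (bool * nat)) (p : form) : form :=
  match qs with
  | [] => p
  | (q, z) :: qs' => qprefix qs' (if q then FAll z p else FEx z p)
  end.
End Syntax.

Arguments FEq {Rel}.
Arguments FRel {Rel}.
Arguments FNeg {Rel}.
Arguments FAnd {Rel}.
Arguments FAll {Rel}.
Arguments FEx {Rel}.
Arguments FImp {Rel}.
Arguments free {Rel}.
Arguments qprefix {Rel}.

Inductive bexp (n : nat) : Type :=
| BArg : Fin.t n -> bexp n
| BNeg : bexp n -> bexp n
| BAnd : bexp n -> bexp n -> bexp n.
Arguments BArg {n}.
Arguments BNeg {n}.
Arguments BAnd {n}.

Fixpoint bapply {Rel : Type} {n : nat} (f : bexp n) (phi : Fin.t n -> form Rel)
  : form Rel :=
  match f with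
  | BArg i => phi i
  | BNeg g => FNeg (bapply g phi)
  | BAnd g h => FAnd (bapply g phi) (bapply h phi)
  end.

Record model (Rel : Type) : Type := Model {
  dom : Type;
  dom_inhabited : dom;
  interp : Rel -> list dom -> Prop
}.

Definition update {M : Type} (a : nat -> M) (x : nat) (b : M) : nat -> M :=
  fun j => if Nat.eqb j x then b else a j.

Fixpoint sat {Rel : Type} (M : model Rel) (a : nat -> dom M) (p : form Rel)
  : Prop :=
  match p with
  | FEq i j => a i = a j
  | FRel r l => interp M r (map a l)
  | FNeg q => ~ sat M a q
  | FAnd q r => sat M a q /\ sat M a r
  | FAll x q => forall b : dom M, sat M (update a x b) q
  end.

Definition denot {Rel : Type} (M : model Rel) (p : form Rel)
  : (nat -> dom M) -> Prop := fun a => sat M a p.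

Definition models {Rel : Type} (M : model Rel) (p : form Rel) : Prop :=
  forall a, sat M a p.

Definition nondep {Rel : Type} (M : model Rel) (phi : form Rel) (x : nat)
  (theta : form Rel) : Prop :=
  forall (a : nat -> dom M) (b : dom M),
    sat M a theta -> sat M (update a x b) theta ->
    (sat M a phi <-> sat M (update a x b) phi).

(* Main.v *)
Require Import Defs.
From Stdlib Require Import List.
From Stdlib Require Fin.
From Stdlib Require Import Classical FunctionalExtensionality PropExtensionality Arith.

Lemma coinc {Rel : Type} (M : model Rel) (p : form Rel) :
  forall a a', (forall y, free y p -> a y = a' y) -> (sat M a p <-> sat M a' p).
Proof.
  induction p; simpl; intros a a' H.
  - rewrite (H n (or_introl eq_refl)), (H n0 (or_intror eq_refl)). tauto.
  - rewrite (map_ext_in a a' l). tauto. intros; apply H; auto.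
  - rewrite (IHp a a' H). tauto.
  - rewrite (IHp1 a a'), (IHp2 a a'). tauto. all: intros; apply H; auto.
  - split; intros Hb b; specialize (Hb b); [apply (IHp (update a n b))|apply (IHp (update a' n b))]; auto;
    intros y Hy; unfold update; destruct (Nat.eqb y n) eqn:E; auto;
    [|symmetry]; apply H; split; auto; intro; subst; rewrite Nat.eqb_refl in E; discriminate.
Qed.

Lemma free_qprefix {Rel : Type} (qs : list (bool * nat)) :
  forall (p : form Rel) y, free y (qprefix qs p) -> free y p.
Proof.
  induction qs as [|[q z] qs IH]; simpl; intros p y H; auto.
  apply IH in H. destruct q; simpl in H; tauto.
Qed.

Lemma free_bapply {Rel : Type} {n} (f : bexp n) (g : Fin.t n -> form Rel) y :
  free y (bapply f g) -> exists i, free y (g i).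
Proof.
  induction f; simpl; intros H; eauto. destruct H; auto.
Qed.

Lemma qprefix_pres {Rel : Type} (M : model Rel) (theta : form Rel) qs :
  (forall p, In p qs -> ~ free (snd p) theta) ->
  forall p p', (forall c, sat M c theta -> (sat M c p <-> sat M c p')) ->
  forall c, sat M c theta -> (sat M c (qprefix qs p) <-> sat M c (qprefix qs p')).
Proof.
  induction qs as [|[q z] qs IH]; simpl; intros Hq p p' Hp; auto.
  apply IH. intros; apply Hq; auto.
  assert (Ht : forall c b, sat M c theta -> sat M (update c z b) theta).
  { intros c b Hc. apply (coinc M theta c); auto. intros y Hy. unfold update.
    destruct (Nat.eqb y z) eqn:E; auto. apply Nat.eqb_eq in E; subst.
    exfalso; apply (Hq (q, z)); auto. }
  intros c Hc. destruct q; simpl.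
  - split; intros H b; apply Hp; auto.
  - split; intros H1 H2; apply H1; intros b Hb; apply (H2 b); apply Hp; auto.
Qed.

Lemma bapply_pres {Rel : Type} (M : model Rel) (theta : form Rel) {n} (f : bexp n) g g' :
  (forall i c, sat M c theta -> (sat M c (g i) <-> sat M c (g' i))) ->
  forall c, sat M c theta -> (sat M c (bapply f g) <-> sat M c (bapply f g')).
Proof.
  intros H c Hc; induction f; simpl; auto.
  rewrite IHf; tauto. rewrite IHf1, IHf2; tauto.
Qed.

Theorem mainTheorem10 (Rel : Type) (M : model Rel) (x : nat) (n : nat)
  (f : bexp n) (theta : form Rel) (phi : Fin.t n -> form Rel)
  (qs : list (bool * nat))
  (Hz : forall p, In p qs -> snd p <> x /\ ~ free (snd p) theta)
  (Hnd : forall i, nondep M (phi i) x theta) :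
  denot M (FImp (FEx x theta)
             (qprefix qs (bapply f (fun i => FAll x (FImp theta (phi i))))))
  = denot M (FAll x (FImp theta (qprefix qs (bapply f phi))))
  /\
  (models M (FEx x theta) ->
   denot M (qprefix qs (bapply f (fun i => FAll x (FImp theta (phi i)))))
   = denot M (FAll x (FImp theta (qprefix qs (bapply f phi))))).
Proof.
  set (psi := fun i => FAll x (FImp theta (phi i))).
  set (P := qprefix qs (bapply f psi)).
  set (Q := qprefix qs (bapply f phi)).
  assert (core : forall c, sat M c theta -> (sat M c P <-> sat M c Q)).
  { apply qprefix_pres. intros p Hp; apply Hz; auto.
    apply bapply_pres. intros i c Hc. unfold psi; simpl. split.
    - intros H. assert (He : sat M (update c x (c x)) (phi i) <-> sat M c (phi i)).
      { apply coinc. intros y _; unfold update; destruct (Nat.eqb y x) eqn:E; auto.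
        apply Nat.eqb_eq in E; subst; auto. }
      apply He. apply NNPP. intro Hn. apply (H (c x)). split; auto.
      apply (coinc M theta c); auto. intros y _; unfold update; destruct (Nat.eqb y x) eqn:E; auto.
        apply Nat.eqb_eq in E; subst; auto.
    - intros H b [H1 H2]. apply H2. apply (Hnd i c b); auto. }
  assert (trans : forall a b, sat M (update a x b) P <-> sat M a P).
  { intros a b. apply coinc. intros y Hy. unfold update.
    destruct (Nat.eqb y x) eqn:E; auto. apply Nat.eqb_eq in E; subst.
    apply free_qprefix, free_bapply in Hy. destruct Hy as [i Hi].
    unfold psi in Hi; simpl in Hi. tauto. }
  assert (main : forall a, sat M a (FImp (FEx x theta) P) <->
                           sat M a (FAll x (FImp theta Q))).
  { intro a; simpl. split.
    - intros H b [Ht Hq]. apply H. split.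
      + intro Hn. apply (Hn b); auto.
      + intro Hp. apply Hq. apply core; auto. apply trans; auto.
    - intros H [He Hp]. apply He. intros b Ht. apply (H b). split; auto.
      intro Hq. apply Hp. apply (trans a b). apply core; auto. }
  split.
  - extensionality a. apply propositional_extensionality. apply main.
  - intros Hm. extensionality a. apply propositional_extensionality.
    rewrite <- (main a). simpl. specialize (Hm a). simpl in Hm. split.
    + tauto.
    + intros H. apply NNPP. tauto.
Qed.
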